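(* Let $R$ and $B$ be disjoint finite sets of points in the plane such that no three points of $R\cup B$ are collinear, and let $f:R\to\{2,3,4,\ldots\}$ be a function. If $|B|=\sum_{x\in R}(f(x)-2)+2$, then there exists a non-crossing geometric spanning tree $T$ on $R\cup B$ such that the set of leaves of $T$ is exactly $B$ and $\deg_T(x)=f(x)$ for every $x\in R$.
   Context: A geometric spanning tree on a point set $P$ is a tree with vertex set $P$ whose edges are drawn as straight-line segments between their endpoints; it is non-crossing if no two edges intersect except at a common endpoint. $\deg_T(v)$ denotes the degree of vertex $v$ in $T$, and a leaf is a vertex of degree one. *)

(* Defs.v *)
From mathcomp Require Import all_boot all_order all_algebra.
From mathcomp Require Import reals.
Set Implicit Arguments. Unset Strict Implicit. Unset Printing Implicit Defensive.
Import Order.TTheory GRing.Theory Num.Theory.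
Local Open Scope ring_scope.

Section Geom.
Variable R : realType.
Definition point := (R * R)%type.

Definition orient (p q r : point) : R :=
  (q.1 - p.1) * (r.2 - p.2) - (q.2 - p.2) * (r.1 - p.1).

Definition collinear (p q r : point) : Prop := orient p q r = 0.

Definition on_segment (z p q : point) : Prop :=
  exists t : R, 0 <= t /\ t <= 1 /\
    z = ((1 - t) * p.1 + t * q.1, (1 - t) * p.2 + t * q.2).
End Geom.

Local Close Scope ring_scope.
Section Graph.
Variable V : finType.

Definition simple_graph (e : rel V) : Prop :=
  symmetric e /\ irreflexive e.

Definition deg (e : rel V) (v : V) : nat := #|[set w | e v w]|.

Definition is_tree (e : rel V) : Prop :=
  [/\ simple_graph e,
      (forall x y : V, connect e x y) &
      (forall c : seq V, (3 <= size c)%N -> ~~ ucycleb e c)].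

Definition non_crossing (R : realType) (pos : V -> point R) (e : rel V) : Prop :=
  forall a b c d : V, e a b -> e c d -> [set a; b] != [set c; d] ->
    forall z : point R, on_segment z (pos a) (pos b) -> on_segment z (pos c) (pos d) ->
      exists2 v : V, (v \in [set a; b]) && (v \in [set c; d]) & z = pos v.
End Graph.

(* Main.v *)
Require Import Defs.
From mathcomp Require Import all_boot all_order all_algebra.
From mathcomp Require Import reals.
From mathcomp Require Import ring lra zify.
Import Order.TTheory GRing.Theory Num.Theory.
Set Implicit Arguments. Unset Strict Implicit. Unset Printing Implicit Defensive.
Section Graphs.
Variable V : finType.

Definition treeOn (S : {set V}) (e : rel V) :=
  [/\ (forall u w, e u w -> (u \in S) && (w \in S)), symmetric e, irreflexive e,
      {in S &, forall x y, connect e x y} &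
      (forall c : seq V, (3 <= size c)%N -> ~~ ucycleb e c)].

Lemma pathX (e : rel V) (X : {set V}) c :
  (forall u w, e u w -> u \in X -> u != c -> w \in X) ->
  forall s u, path e u s -> u \in X -> u != c -> c \notin s -> all (mem X) s.
Proof.
move=> st; elim=> [|v s IH] u //=.
move=> /andP[euv ps] uX uc; rewrite inE negb_or => /andP[cv cs].
have vX : v \in X by apply: st euv uX uc.
rewrite vX /=; apply: IH ps vX _ cs; by rewrite eq_sym.
Qed.

Section Union.
Variables (S A B : {set V}) (c : V) (eA eB : rel V).
Hypotheses (AB : A :|: B = S) (AIB : A :&: B = [set c]).
Hypotheses (tA : treeOn A eA) (tB : treeOn B eB).
Let e := [rel u w | eA u w || eB u w].

Lemma inAB x : x \in A -> x \in B -> x = c.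
Proof. move=> xA xB; have: x \in A :&: B by rewrite inE xA xB.
by rewrite AIB inE => /eqP. Qed.

Lemma cA : c \in A.
Proof. have: c \in A :&: B by rewrite AIB set11.
by rewrite inE => /andP[]. Qed.
Lemma cB : c \in B.
Proof. have: c \in A :&: B by rewrite AIB set11.
by rewrite inE => /andP[]. Qed.

Lemma stepA u w : e u w -> u \in A -> u != c -> w \in A.
Proof.
case: tA => eA_in _ _ _ _; case: tB => eB_in _ _ _ _.
move=> /orP[/eA_in/andP[] //| /eB_in/andP[uB _]] uA uc.
by move: uc; rewrite (inAB uA uB) eqxx.
Qed.

Lemma stepB u w : e u w -> u \in B -> u != c -> w \in B.
Proof.
case: tA => eA_in _ _ _ _; case: tB => eB_in _ _ _ _.
move=> /orP[/eA_in/andP[uA _]| /eB_in/andP[] //] uB uc.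
by move: uc; rewrite (inAB uA uB) eqxx.
Qed.

Lemma subA : {in A &, subrel e eA}.
Proof.
case: tB => eB_in _ irrB _ _.
move=> u w uA wA /orP[//|eBuw]; have /andP[uB wB] := eB_in _ _ eBuw.
by move: eBuw; rewrite (inAB uA uB) (inAB wA wB) irrB.
Qed.

Lemma subB : {in B &, subrel e eB}.
Proof.
case: tA => eA_in _ irrA _ _.
move=> u w uB wB /orP[eAuw|//]; have /andP[uA wA] := eA_in _ _ eAuw.
by move: eAuw; rewrite (inAB uA uB) (inAB wA wB) irrA.
Qed.

Lemma all_side (cy : seq V) : (3 <= size cy)%N -> ucycleb e cy ->
  exists cy' : seq V, [/\ (3 <= size cy')%N, ucycleb e cy' & all (mem A) cy' || all (mem B) cy'].
Proof.
case: tA => eA_in _ _ _ _; case: tB => eB_in _ _ _ _.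
move=> sz /andP[cyc un].
case: (boolP (c \in cy)) => [ccy | ncy].
  case: (rot_to ccy) => i s' eq.
  have sz' : (3 <= size (c :: s'))%N by rewrite -eq size_rot.
  have cyc' : cycle e (c :: s') by rewrite -eq rot_cycle.
  have un' : uniq (c :: s') by rewrite -eq rot_uniq.
  exists (c :: s'); split => //; first by rewrite /ucycleb cyc' un'.
  case: s' sz' cyc' un' {eq} => [|v s''] //= sz' cyc' /andP[cns un'].
  move: cyc' => /andP[ecv]; rewrite rcons_path => /andP[pv _].
  move: cns; rewrite inE negb_or => /andP[cv cs''].
  have vc : v != c by rewrite eq_sym.
  case/orP: (ecv) => [eAcv | eBcv].
    have vA : v \in A by have /andP[] := eA_in _ _ eAcv.
    by rewrite cA vA (pathX stepA pv vA vc cs'').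
  have vB : v \in B by have /andP[] := eB_in _ _ eBcv.
  by rewrite cB vB (pathX stepB pv vB vc cs'') orbT.
exists cy; split => //; first by rewrite /ucycleb cyc un.
case: cy sz cyc un ncy => [|u [|v s]] //= sz cyc un ncy.
have cyc2 := cyc; move: cyc2 => /andP[euv _].
have uc : u != c by move: ncy; rewrite inE negb_or eq_sym => /andP[].
have ncs : c \notin rcons (v :: s) u.
  by rewrite mem_rcons inE negb_or eq_sym uc /=; move: ncy; rewrite inE negb_or => /andP[].
case/orP: (euv) => [eAuv | eBuv].
  have uA : u \in A by have /andP[] := eA_in _ _ eAuv.
  have := pathX stepA (cyc : path e u (rcons (v :: s) u)) uA uc ncs; rewrite all_rcons uA /= => H.
  by move: H => /and3P[_ vA sA]; rewrite vA sA.
have uB : u \in B by have /andP[] := eB_in _ _ eBuv.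
have := pathX stepB (cyc : path e u (rcons (v :: s) u)) uB uc ncs; rewrite all_rcons uB /= => H.
by move: H => /and3P[_ vB sB]; rewrite vB sB orbT.
Qed.

Lemma union_tree : treeOn S e.
Proof.
have [eA_in symA irrA conA acA] := tA; have [eB_in symB irrB conB acB] := tB.
split.
- move=> u w /orP[/eA_in|/eB_in] /andP[uX wX]; rewrite -AB !inE ?uX ?wX ?orbT //.
- by move=> u w /=; rewrite symA symB.
- by move=> u /=; rewrite irrA irrB.
- have sA : forall x y, connect eA x y -> connect e x y.
    by apply: connect_sub => x y h; apply: connect1; rewrite /= h.
  have sB : forall x y, connect eB x y -> connect e x y.
    by apply: connect_sub => x y h; apply: connect1; rewrite /= h orbT.
  move=> x y; rewrite -AB !inE => /orP[xA|xB] /orP[yA|yB].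
  + by apply: sA; apply: conA.
  + by apply: connect_trans (sA _ _ (conA _ _ xA cA)) (sB _ _ (conB _ _ cB yB)).
  + by apply: connect_trans (sB _ _ (conB _ _ xB cB)) (sA _ _ (conA _ _ cA yA)).
  + by apply: sB; apply: conB.
- move=> cy sz; apply/negP => ucy.
  have [cy' [sz' /andP[cyc' un'] /orP[allA|allB]]] := all_side sz ucy.
    by move: (acA _ sz'); rewrite /ucycleb (sub_in_cycle subA allA cyc') un'.
  by move: (acB _ sz'); rewrite /ucycleb (sub_in_cycle subB allB cyc') un'.
Qed.

Lemma union_deg v : deg e v = (deg eA v + deg eB v)%N.
Proof.
have [eA_in _ irrA _ _] := tA; have [eB_in _ irrB _ _] := tB.
rewrite /deg -cardsUI.
have -> : [set w | eA v w] :&: [set w | eB v w] = set0.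
  apply/setP => w; rewrite !inE; apply/negbTE/negP => /andP[h1 h2].
  have /andP[vA wA] := eA_in _ _ h1; have /andP[vB wB] := eB_in _ _ h2.
  by move: h1; rewrite (inAB vA vB) (inAB wA wB) irrA.
rewrite cards0 addn0; apply: eq_card => w; by rewrite !inE.
Qed.

End Union.

Lemma deg_out S e v : treeOn S e -> v \notin S -> deg e v = 0%N.
Proof.
case=> ein _ _ _ _ vS; apply/eqP; rewrite cards_eq0; apply/eqP/setP => w.
rewrite !inE; apply/negbTE/negP => /ein/andP[vS' _]; by rewrite vS' in vS.
Qed.

End Graphs.
Section Geo.
Local Open Scope ring_scope.
Variable R : realType.
Variable V : finType.
Variable pos : V -> point R.
Hypothesis gp : forall u v w : V, u != v -> v != w -> u != w -> ~ collinear (pos u) (pos v) (pos w).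

Lemma orient_aff (P Q X Y : point R) t :
  orient P Q ((1 - t) * X.1 + t * Y.1, (1 - t) * X.2 + t * Y.2) =
  (1 - t) * orient P Q X + t * orient P Q Y.
Proof. rewrite /orient /=. ring. Qed.
Lemma orient_seg0 (X Y z : point R) : on_segment z X Y -> orient X Y z = 0.
Proof. case=> t [_ [_ ->]]; rewrite /orient /=; ring. Qed.
Lemma orientN (a b c : point R) : orient b a c = - orient a b c.
Proof. rewrite /orient; ring. Qed.
Lemma orientC (a b c : point R) : orient b c a = orient a b c.
Proof. rewrite /orient; ring. Qed.
Lemma orient_aa (a b : point R) : orient a b a = 0.
Proof. rewrite /orient; ring. Qed.
Lemma orient_ab (a b : point R) : orient a b b = 0.
Proof. rewrite /orient; ring. Qed.

Section Sep.
Variables (A B : {set V}) (c : V) (P Q : point R).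
Hypotheses (hA : forall a, a \in A -> orient P Q (pos a) <= 0)
  (hB : forall b, b \in B -> b != c -> 0 < orient P Q (pos b))
  (hc : orient P Q (pos c) = 0).

Lemma on_seg_le (X Y z : point R) : on_segment z X Y ->
  orient P Q X <= 0 -> orient P Q Y <= 0 -> orient P Q z <= 0.
Proof.
case=> t [t0 [t1 ->]]; rewrite orient_aff => hX hY.
have h1 : (1 - t) * orient P Q X <= 0 by rewrite mulr_ge0_le0 // subr_ge0.
have h2 : t * orient P Q Y <= 0 by rewrite mulr_ge0_le0.
lra.
Qed.

Lemma sep_pt a a' b b' z : a \in A -> a' \in A -> b \in B -> b' \in B -> b != b' ->
  on_segment z (pos a) (pos a') -> on_segment z (pos b) (pos b') ->
  z = pos c /\ (c \in [set b; b']).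
Proof.
move=> aA a'A bB b'B bb' sa sb.
have zle := on_seg_le sa (hA aA) (hA a'A).
case: sb => t [t0 [t1 ez]]; rewrite ez orient_aff in zle.
have ge : forall x, x \in B -> 0 <= orient P Q (pos x).
  by move=> x xB; case: (eqVneq x c) => [->|xc]; [rewrite hc | apply/ltW/hB].
case: (eqVneq b c) => [ebc|bc].
  subst b; have b'c : b' != c by rewrite eq_sym.
  have ob' := hB b'B b'c.
  rewrite hc mulr0 add0r in zle.
  have t0' : t = 0.
    apply/eqP; rewrite eq_le t0 andbT; nra.
  split; last by rewrite !inE eqxx.
  by rewrite ez t0' subr0 !mul1r !mul0r !addr0; case: (pos c).
case: (eqVneq b' c) => [eb'c|b'c].
  subst b'; have ob := hB bB bc.
  rewrite hc mulr0 addr0 in zle.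
  have t1' : t = 1.
    apply/eqP; rewrite eq_le t1 /=; nra.
  split; last by rewrite !inE eqxx orbT.
  by rewrite ez t1' subrr !mul0r !mul1r !add0r; case: (pos c).
have ob := hB bB bc; have ob' := hB b'B b'c.
exfalso; nra.
Qed.

Lemma seg_end a a' z x : a != a' -> on_segment z (pos a) (pos a') -> z = pos x ->
  x \in [set a; a'].
Proof.
move=> aa' sa zx; rewrite !inE; apply/negPn/negP; rewrite negb_or => /andP[xa xa'].
apply: (gp aa' (_ : a' != x) (_ : a != x)); rewrite 1?eq_sym //.
by rewrite /collinear -zx; apply: orient_seg0.
Qed.

End Sep.

Lemma nc_union (A B : {set V}) c P Q eA eB :
  (forall a, a \in A -> orient P Q (pos a) <= 0) ->
  (forall b, b \in B -> b != c -> 0 < orient P Q (pos b)) ->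
  orient P Q (pos c) = 0 ->
  treeOn A eA -> treeOn B eB -> non_crossing pos eA -> non_crossing pos eB ->
  non_crossing pos [rel u w | eA u w || eB u w].
Proof.
move=> hA hB hc [eA_in _ irrA _ _] [eB_in _ irrB _ _] ncA ncB.
move=> a b x y /orP[eab|eab] /orP[exy|exy] neq z sab sxy.
- exact: ncA eab exy neq z sab sxy.
- have /andP[aA bA] := eA_in _ _ eab; have /andP[xB yB] := eB_in _ _ exy.
  have xy : x != y by apply: contraTneq exy => ->; rewrite irrB.
  have ab : a != b by apply: contraTneq eab => ->; rewrite irrA.
  have [zc cxy] := sep_pt hA hB hc aA bA xB yB xy sab sxy.
  exists c => //; rewrite cxy andbT; exact: seg_end ab sab zc.
- have /andP[aB bB] := eB_in _ _ eab; have /andP[xA yA] := eA_in _ _ exy.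
  have ab : a != b by apply: contraTneq eab => ->; rewrite irrB.
  have xy : x != y by apply: contraTneq exy => ->; rewrite irrA.
  have [zc cab] := sep_pt hA hB hc xA yA aB bB ab sxy sab.
  exists c => //; rewrite cab /=; exact: seg_end xy sxy zc.
- exact: ncB eab exy neq z sab sxy.
Qed.

End Geo.
Section Comb.
Variable R : realType.
Variable V : finType.
Variable pos : V -> point R.
Hypothesis gp : forall u v w : V, u != v -> v != w -> u != w -> ~ collinear (pos u) (pos v) (pos w).

Definition Good (S : {set V}) (d : V -> nat) :=
  exists e : rel V, [/\ treeOn S e, non_crossing pos e & {in S, forall v, deg e v = d v}].

Definition IHyp (n : nat) := forall (S' : {set V}) (d' : V -> nat), (#|S'| < n)%N -> (0 < #|S'|)%N ->
  (\sum_(v in S') d' v = (#|S'|.-1).*2)%N -> ((1 < #|S'|)%N -> {in S', forall v, 0 < d' v}%N) ->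
  Good S' d'.

Lemma combine (S A B : {set V}) c (P Q : point R) (d : V -> nat) x :
  IHyp #|S| ->
  A :|: B = S -> A :&: B = [set c] -> (#|A| < #|S|)%N -> (#|B| < #|S|)%N ->
  (forall a, a \in A -> orient P Q (pos a) <= 0)%R ->
  (forall b, b \in B -> b != c -> 0 < orient P Q (pos b))%R ->
  orient P Q (pos c) = 0%R ->
  (\sum_(v in S) d v = (#|S|.-1).*2)%N -> {in S, forall v, 0 < d v}%N ->
  (0 < x < d c)%N ->
  (\sum_(v in A) (if v == c then x else d v) = (#|A|.-1).*2)%N ->
  Good S d.
Proof.
move=> IH AB AIB ltA ltB hA hB hc sumS posS /andP[x0 xd] sumA.
have cA : c \in A.
  have: c \in A :&: B by rewrite AIB set11.
  by rewrite inE => /andP[].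
have cB : c \in B.
  have: c \in A :&: B by rewrite AIB set11.
  by rewrite inE => /andP[].
have inAB : forall y, y \in A -> y \in B -> y = c.
  move=> y yA yB; have: y \in A :&: B by rewrite inE yA yB.
  by rewrite AIB inE => /eqP.
have AS : A \subset S by rewrite -AB subsetUl.
have BE : B = c |: (S :\: A).
  apply/setP => y; rewrite !inE -AB !inE.
  case: (eqVneq y c) => [->|yc] /=; first by rewrite cB.
  case yA: (y \in A) => //=.
  by apply/negbTE/negP => yB; move: yc; rewrite (inAB y yA yB) eqxx.
have cSA : c \notin S :\: A by rewrite inE cA.
set dA := fun v => if v == c then x else d v.
set dB := fun v => if v == c then (d c - x)%N else d v.
have sumSsplit : forall F : V -> nat, (\sum_(v in S) F v = \sum_(v in A) F v + \sum_(v in S :\: A) F v)%N.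
  by move=> F; rewrite (big_setID A) /= (setIidPr AS).
have cardS : #|S| = (#|A| + #|S :\: A|)%N.
  by rewrite -(cardsID A S) (setIidPr AS).
have cardB : #|B| = (#|S :\: A|).+1 by rewrite BE cardsU1 cSA.
have sumAd : forall F : V -> nat, (\sum_(v in A) F v = F c + \sum_(v in A :\ c) F v)%N.
  by move=> F; rewrite (big_setD1 c cA).
have eqA : (\sum_(v in A :\ c) dA v = \sum_(v in A :\ c) d v)%N.
  by apply: eq_bigr => v; rewrite !inE /dA => /andP[/negbTE -> _].
have eqB : (\sum_(v in S :\: A) dB v = \sum_(v in S :\: A) d v)%N.
  by apply: eq_bigr => v vSA; rewrite /dB; case: eqP => // ev; move: vSA; rewrite ev (negbTE cSA).
have sumB : (\sum_(v in B) dB v = (#|B|.-1).*2)%N.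
  rewrite BE big_setU1 //= eqB -BE cardB /=.
  rewrite /dB eqxx.
  move: sumA; rewrite sumAd eqA /dA eqxx => sumA.
  move: sumS; rewrite sumSsplit sumAd cardS => sumS.
  have A0 : (0 < #|A|)%N by apply/card_gt0P; exists c.
  rewrite -!muln2 in sumA sumS *; lia.
have [eA [tA ncA dgA]] : Good A dA.
  apply: IH => //; first by apply/card_gt0P; exists c.
  move=> _ v vA; rewrite /dA; case: eqP => // _; exact: posS (subsetP AS v vA).
have [eB [tB ncB dgB]] : Good B dB.
  apply: IH => //; first by apply/card_gt0P; exists c.
  move=> _ v vB; rewrite /dB; case: eqP => [_|_]; first by rewrite subn_gt0.
  by apply: posS; rewrite -AB inE vB orbT.
exists [rel u w | eA u w || eB u w]; split.
- exact: union_tree AB AIB tA tB.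
- exact: nc_union hA hB hc tA tB ncA ncB.
- move=> v vS; rewrite (union_deg AIB tA tB).
  case: (eqVneq v c) => [->|vc].
    by rewrite dgA // dgB // /dA /dB eqxx subnKC // ltnW.
  move: vS; rewrite -AB inE => /orP[vA|vB].
    have vB : v \notin B by apply: contra vc => vB; rewrite (inAB v vA vB).
    by rewrite dgA // (deg_out tB vB) addn0 /dA (negbTE vc).
  have vA : v \notin A by apply: contra vc => vA; rewrite (inAB v vA vB).
  by rewrite dgB // (deg_out tA vA) /dB (negbTE vc).
Qed.

End Comb.
Lemma trans_core (R : realType) (u1 u2 v1 v2 w1 w2 : R) : (0 <= u1 -> 0 <= v1 -> 0 <= w1 ->
  0 < u1*v2 - u2*v1 -> 0 < v1*w2 - v2*w1 -> 0 <= u1*w2 - u2*w1)%R.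
Proof.
move=> hu hv hw ha hb; rewrite leNgt; apply/negP => hc.
set a := (u1*v2 - u2*v1)%R in ha; set b := (v1*w2 - v2*w1)%R in hb; set g := (u1*w2 - u2*w1)%R in hc.
have id : (a * w1 + b * u1 + (- g) * v1 = 0)%R by rewrite /a /b /g; ring.
have t1 : (0 <= a * w1)%R by rewrite mulr_ge0 // ltW.
have t2 : (0 <= b * u1)%R by rewrite mulr_ge0 // ltW.
have t3 : (0 <= (- g) * v1)%R by rewrite mulr_ge0 // oppr_ge0 ltW.
have e2 : (b * u1 = 0)%R by lra.
have e3 : ((- g) * v1 = 0)%R by lra.
move/eqP: e2; rewrite mulf_eq0 (gt_eqF hb) /= => /eqP u0.
move/eqP: e3; rewrite mulf_eq0 oppr_eq0 (lt_eqF hc) /= => /eqP v0.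
by move: ha; rewrite /a u0 v0 !mul0r mulr0 subrr ltxx.
Qed.

Section Step.
Local Open Scope ring_scope.
Variable R : realType.
Variable V : finType.
Variable pos : V -> point R.
Hypothesis pos_inj : injective pos.
Hypothesis gp : forall u v w : V, u != v -> v != w -> u != w -> ~ collinear (pos u) (pos v) (pos w).
Variables (S : {set V}) (p : V).
Hypotheses (pS : p \in S) (pmin : forall q, q \in S -> (pos p).1 <= (pos q).1).

Definition S' := S :\ p.
Definition le : rel V := fun a b => 0 <= orient (pos p) (pos a) (pos b).
Definition s := sort le (enum S').
Definition n := #|S'|.

Lemma orient_sw (a b c : point R) : orient a c b = - orient a b c.
Proof. rewrite /orient; ring. Qed.

Lemma mem_s y : (y \in s) = (y \in S').
Proof. by rewrite mem_sort mem_enum. Qed.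
Lemma uniq_s : uniq s.
Proof. by rewrite sort_uniq enum_uniq. Qed.
Lemma size_s : size s = n.
Proof. by rewrite size_sort -cardE. Qed.
Lemma le_total : total le.
Proof.
move=> a b; rewrite /le [orient _ (pos b) _]orient_sw oppr_ge0.
by case: (lerP 0 (orient (pos p) (pos a) (pos b))) => h //=; rewrite ltW.
Qed.

Lemma S'P y : (y \in S') = (y != p) && (y \in S).
Proof. by rewrite !inE. Qed.

Lemma or_ne0 a b : a \in S' -> b \in S' -> a != b -> orient (pos p) (pos a) (pos b) != 0.
Proof.
rewrite !S'P => /andP[ap _] /andP[bp _] ab; apply/eqP => h.
by apply: (gp (_ : p != a) ab (_ : p != b)); rewrite 1?eq_sym.
Qed.

Lemma le_trans_in : {in S' & &, transitive le}.
Proof.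
move=> b a c aS bS cS; rewrite /le => hab hbc.
case: (eqVneq a b) => [->//|ab]; case: (eqVneq b c) => [<-//|bc].
case: (eqVneq a c) => [->|ac]; first by rewrite /orient; lra.
have hab' : 0 < orient (pos p) (pos a) (pos b) by rewrite lt_def or_ne0.
have hbc' : 0 < orient (pos p) (pos b) (pos c) by rewrite lt_def or_ne0.
move: hab' hbc'; rewrite /orient => h1 h2.
have ha : 0 <= (pos a).1 - (pos p).1 by rewrite subr_ge0; apply: pmin; move: bS; rewrite S'P => /andP[].
have hb : 0 <= (pos b).1 - (pos p).1 by rewrite subr_ge0; apply: pmin; move: aS; rewrite S'P => /andP[].
have hc : 0 <= (pos c).1 - (pos p).1 by rewrite subr_ge0; apply: pmin; move: cS; rewrite S'P => /andP[].
exact: trans_core ha hb hc h1 h2.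
Qed.

Lemma sorted_s : sorted le s.
Proof. exact: sort_sorted le_total _. Qed.

Lemma or_pos x y : x \in S' -> y \in S' -> (index x s < index y s)%N ->
  0 < orient (pos p) (pos x) (pos y).
Proof.
move=> xS yS lt.
have tr : {in s & &, transitive le}.
  by move=> b a c; rewrite !mem_s; apply: le_trans_in.
have xs : x \in s by rewrite mem_s.
have ys : y \in s by rewrite mem_s.
have h := sorted_ltn_index_in tr sorted_s x y xs ys lt.
move: h; rewrite /le lt_def => ->; rewrite andbT.
apply: or_ne0 => //; apply: contraTneq lt => ->; by rewrite ltnn.
Qed.

Lemma or_neg x y : x \in S' -> y \in S' -> (index y s < index x s)%N ->
  orient (pos p) (pos x) (pos y) < 0.
Proof. by move=> xS yS lt; rewrite orient_sw oppr_lt0; apply: or_pos. Qed.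

Definition Pre k := [set y in S' | (index y s < k)%N].

Lemma sum_Pre (F : V -> nat) k : (k <= n)%N ->
  (\sum_(y in Pre k) F y = \sum_(0 <= j < k) F (nth p s j))%N.
Proof.
move=> kn.
rewrite (eq_bigl (fun y => (y \in S') && (index y s < k)%N)); last by move=> y; rewrite inE.
rewrite -big_enum_cond (perm_big s); last by rewrite perm_sym perm_sort.
rewrite (big_nth p) size_s [RHS](@big_nat_widen _ _ _ 0 k n) //.
apply: congr_big_nat => // i /andP[_ iN].
by rewrite index_uniq ?size_s ?uniq_s.
Qed.

Lemma card_Pre k : (k <= n)%N -> #|Pre k| = k.
Proof. by move=> kn; rewrite -sum1_card sum_Pre // sum_nat_const_nat muln1 subn0. Qed.

Lemma nth_S' j : (j < n)%N -> nth p s j \in S'.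
Proof. by move=> jn; rewrite -mem_s mem_nth // size_s. Qed.
Lemma index_nth j : (j < n)%N -> index (nth p s j) s = j.
Proof. by move=> jn; rewrite index_uniq ?size_s ?uniq_s. Qed.
Lemma index_lt y : y \in S' -> (index y s < n)%N.
Proof. by rewrite -mem_s -index_mem size_s. Qed.
Lemma eq_nth y j : y \in S' -> (j < n)%N -> (y == nth p s j) = (index y s == j).
Proof.
move=> yS jn; apply/eqP/eqP => [->|<-]; first by rewrite index_nth.
by rewrite nth_index // mem_s.
Qed.
Lemma pS' : p \notin S'.
Proof. by rewrite !inE eqxx. Qed.
Lemma SE : S = p |: S'.
Proof. by rewrite setD1K. Qed.

End Step.

Lemma sum_if (g : nat -> nat) x i m : (i < m)%N ->
  (\sum_(0 <= j < m) (if j == i then x else g j) + g i = \sum_(0 <= j < m) g j + x)%N.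
Proof.
move=> im.
rewrite !(@big_cat_nat _ _ _ i 0 m) ?leq0n ?(ltnW im) //.
rewrite !(@big_ltn _ _ _ i m) // eqxx.
have e1 : (\sum_(0 <= j < i) (if j == i then x else g j) = \sum_(0 <= j < i) g j)%N.
  by apply: congr_big_nat => // j /andP[_ ji]; rewrite (ltn_eqF ji).
have e2 : (\sum_(i.+1 <= j < m) (if j == i then x else g j) = \sum_(i.+1 <= j < m) g j)%N.
  by apply: congr_big_nat => // j /andP[_ /andP[ij _]]; rewrite (gtn_eqF ij).
rewrite e1 e2 /=; lia.
Qed.


Lemma cross (Q : nat -> bool) a b : (a <= b)%N -> Q a -> ~~ Q b ->
  exists k, [/\ (a <= k < b)%N, Q k & ~~ Q k.+1].
Proof.
move=> ab; elim: b ab => [|b IHb] ab Qa nQb.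
  by move: ab; rewrite leqn0 => /eqP ea; move: nQb; rewrite -ea Qa.
case: (leqP a b) => [ab'|ba].
  case Qb: (Q b).
    by exists b; split => //; rewrite ab' ltnSn.
  have [k [kr Qk nQk]] := IHb ab' Qa (negbT Qb).
  by exists k; split => //; move: kr => /andP[-> kb]; rewrite ltnS ltnW.
have eab : a = b.+1 by apply/eqP; rewrite eqn_leq ab ba.
by move: nQb; rewrite -eab Qa.
Qed.

Section Cases.
Local Open Scope ring_scope.
Variable R : realType.
Variable V : finType.
Variable pos : V -> point R.
Hypothesis pos_inj : injective pos.
Hypothesis gp : forall u v w : V, u != v -> v != w -> u != w -> ~ collinear (pos u) (pos v) (pos w).
Variables (S : {set V}) (p : V) (d : V -> nat).
Hypotheses (pS : p \in S) (pmin : forall q, q \in S -> (pos p).1 <= (pos q).1).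
Hypothesis IH : IHyp pos #|S|.
Hypothesis sumS : (\sum_(v in S) d v = (#|S|.-1).*2)%N.
Hypothesis posS : {in S, forall v, 0 < d v}%N.

Local Notation s := (s pos S p).
Local Notation S' := (S' S p).
Local Notation n := (n S p).
Local Notation Pre := (Pre pos S p).
Local Notation D j := (d (nth p s j)).
Local Notation Ps k := (\sum_(0 <= j < k) D j)%N.

Lemma cardS : #|S| = n.+1.
Proof. by rewrite {1}(SE pS) cardsU1 pS'. Qed.


Lemma Pre_sub k : Pre k \subset S'.
Proof. by apply/subsetP => y; rewrite inE => /andP[]. Qed.

Lemma Pre_n : Pre n = S'.
Proof. by apply/setP => y; rewrite inE; case yS: (y \in S') => //=; rewrite index_lt. Qed.

Lemma sum_total : (d p + Ps n = n.*2)%N.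
Proof.
move: sumS; rewrite cardS /= {1}(SE pS) big_setU1 ?pS' //= -{1}Pre_n sum_Pre //.
Qed.


Lemma inPre y k : (y \in Pre k) = (y \in S') && (index y s < k)%N.
Proof. by rewrite inE. Qed.
Lemma inS' y : (y \in S') = (y != p) && (y \in S).
Proof. by rewrite !inE. Qed.
Lemma pPre k : p \notin Pre k.
Proof. by rewrite inPre (negbTE (pS' S p)). Qed.

Lemma case1 k : (0 < k < n)%N -> (2 <= d p)%N -> (Ps k).+1 = k.*2 -> Good pos S d.
Proof.
move=> /andP[k0 kn] dp2 hk.
set q := nth p s k.-1.
have k1n : (k.-1 < n)%N by lia.
have qS : q \in S' := nth_S' pos k1n.
have iq : index q s = k.-1 := index_nth pos k1n.
have cPre : #|Pre k| = k by rewrite card_Pre // ltnW.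
have cD : #|S' :\: Pre k| = (n - k)%N.
  by rewrite cardsD (setIidPr (Pre_sub k)) cPre.
apply: (combine gp (A := p |: Pre k) (B := p |: (S' :\: Pre k)) (c := p)
          (P := pos p) (Q := pos q) (x := 1%N) IH).
- rewrite [RHS](SE pS); apply/setP => y; rewrite !inE.
  by case: (y == p); case: (y \in S); case: (index y s < k)%N.
- apply/setP => y; rewrite !inE.
  by case: (y == p); case: (y \in S); case: (index y s < k)%N.
- by rewrite cardsU1 pPre cardS cPre; lia.
- rewrite cardsU1 in_setD (negbTE (pS' S p)) andbF cD cardS; lia.
- move=> a; rewrite in_setU1 inPre => /orP[/eqP ->|/andP[aS ak]].
    by rewrite orient_aa.
  case: (eqVneq (index a s) k.-1) => [ia|ia].
    have -> : a = q by apply/eqP; rewrite (eq_nth pos aS k1n) ia.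
    by rewrite orient_ab.
  rewrite orient_sw oppr_le0 ltW //; apply: (or_pos gp pmin aS qS); rewrite iq; lia.
- move=> b; rewrite in_setU1 in_setD inPre => /orP[/eqP ->|]; first by rewrite eqxx.
  move=> /andP[/nandP[/negPf bS|bk] bS'] _; first by rewrite bS in bS'.
  apply: (or_pos gp pmin qS bS'); rewrite iq; lia.
- by rewrite orient_aa.
- exact: sumS.
- exact: posS.
- by rewrite /=; lia.
- rewrite big_setU1 ?pPre //= eqxx cardsU1 pPre cPre /=.
  rewrite (eq_bigr d); last first.
    by move=> v vP; case: eqP => // ev; move: vP; rewrite ev (negbTE (pPre k)).
  rewrite sum_Pre; last by rewrite ltnW.
  lia.
Qed.


Lemma eq_q y i : (i < n)%N -> (y == nth p s i) = (y \in S') && (index y s == i).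
Proof.
move=> iN; case yS: (y \in S'); first by rewrite (eq_nth pos yS iN).
by apply/negbTE; apply: contraFneq yS => ->; apply: nth_S'.
Qed.

Lemma nth_eq j i : (j < n)%N -> (i < n)%N -> (nth p s j == nth p s i) = (j == i).
Proof. by move=> jn iN; rewrite eq_q // nth_S' // index_nth. Qed.

Lemma sum_Pre_if x i k : (i < n)%N -> (k <= n)%N ->
  (\sum_(y in Pre k) (if y == nth p s i then x else d y) =
   \sum_(0 <= j < k) (if j == i then x else D j))%N.
Proof.
move=> iN kn; rewrite sum_Pre //; apply: congr_big_nat => // j /andP[_ jk].
by rewrite nth_eq //; apply: leq_trans kn.
Qed.

Lemma caseF i : (i.+2 <= n)%N -> d p = 1%N -> (Ps i <= i.*2)%N -> (i.*2.+2 <= Ps i + D i)%N ->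
  Good pos S d.
Proof.
move=> iN dp1 h1 h2.
set q := nth p s i.
have iN' : (i < n)%N by lia.
have qS : q \in S' := nth_S' pos iN'.
have iq : index q s = i := index_nth pos iN'.
have qp : (q == p) = false by apply/eqP => e; move: qS; rewrite e (negbTE (pS' S p)).
have cPre : #|Pre i.+1| = i.+1 by rewrite card_Pre.
have cD : #|S' :\: Pre i| = (n - i)%N.
  by rewrite cardsD (setIidPr (Pre_sub i)) card_Pre // ltnW.
apply: (combine gp (A := p |: Pre i.+1) (B := S' :\: Pre i) (c := q)
          (P := pos p) (Q := pos q) (x := (i.*2.+1 - Ps i)%N) IH).
- rewrite [RHS](SE pS); apply/setP => y; rewrite !inE.
  case: (y == p) => //=; case: (y \in S) => //=; lia.
- apply/setP => y; rewrite in_setI in_setU1 in_setD !inPre in_set1 (eq_q _ iN').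
  case: (eqVneq y p) => [->|yp] /=; first by rewrite (negbTE (pS' S p)).
  case: (y \in S') => //=; lia.
- by rewrite cardsU1 pPre cardS cPre; lia.
- by rewrite cD cardS; lia.
- move=> a; rewrite in_setU1 inPre => /orP[/eqP ->|/andP[aS ak]].
    by rewrite orient_aa.
  case: (eqVneq (index a s) i) => [ia|ia].
    have -> : a = q by apply/eqP; rewrite (eq_nth pos aS iN') ia.
    by rewrite orient_ab.
  rewrite orient_sw oppr_le0 ltW //; apply: (or_pos gp pmin aS qS); rewrite iq; lia.
- move=> b; rewrite in_setD inPre (eq_q _ iN') => /andP[/nandP[/negPf bS|bk] bS'].
    by rewrite bS in bS'.
  rewrite bS' /= => bi.
  apply: (or_pos gp pmin qS bS'); rewrite iq; lia.
- by rewrite orient_ab.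
- exact: sumS.
- exact: posS.
- by rewrite /q; apply/andP; split; lia.
- rewrite big_setU1 ?pPre //= eq_sym qp cardsU1 pPre cPre /=.
  rewrite sum_Pre_if //.
  have := sum_if (fun j => D j) (i.*2.+1 - Ps i) (ltnSn i).
  rewrite !big_nat_recr //= eqxx /q; lia.
Qed.

Lemma caseB i : (0 < i < n)%N -> d p = 1%N -> (Ps i < i.*2)%N -> (i.*2.+1 <= Ps i + D i)%N ->
  Good pos S d.
Proof.
move=> /andP[i0 iN] dp1 h1 h2.
set q := nth p s i.
have qS : q \in S' := nth_S' pos iN.
have iq : index q s = i := index_nth pos iN.
have qp : (q == p) = false by apply/eqP => e; move: qS; rewrite e (negbTE (pS' S p)).
have cPre : #|Pre i.+1| = i.+1 by rewrite card_Pre.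
have cD : #|S' :\: Pre i| = (n - i)%N.
  by rewrite cardsD (setIidPr (Pre_sub i)) card_Pre // ltnW.
have hx := sum_total.
apply: (combine gp (A := p |: (S' :\: Pre i)) (B := Pre i.+1) (c := q)
          (P := pos q) (Q := pos p) (x := (D i - (i.*2 - Ps i))%N) IH).
- rewrite [RHS](SE pS); apply/setP => y; rewrite !inE.
  case: (y == p) => //=; case: (y \in S) => //=; lia.
- apply/setP => y; rewrite in_setI in_setU1 in_setD !inPre in_set1 (eq_q _ iN).
  case: (eqVneq y p) => [->|yp] /=; first by rewrite (negbTE (pS' S p)).
  case: (y \in S') => //=; lia.
- by rewrite cardsU1 in_setD (negbTE (pS' S p)) andbF cD cardS; lia.
- by rewrite cPre cardS; lia.
- move=> a; rewrite in_setU1 in_setD inPre => /orP[/eqP ->|/andP[ak aS]].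
    by rewrite orient_ab.
  case: (eqVneq (index a s) i) => [ia|ia].
    have -> : a = q by apply/eqP; rewrite (eq_nth pos aS iN) ia.
    by rewrite orient_aa.
  rewrite orientN oppr_le0 ltW //; apply: (or_pos gp pmin qS aS); rewrite iq; lia.
- move=> b; rewrite inPre (eq_q _ iN) => /andP[bS bk].
  rewrite bS /= => bi.
  rewrite orientN orient_sw opprK.
  apply: (or_pos gp pmin bS qS); rewrite iq; lia.
- by rewrite orient_aa.
- exact: sumS.
- exact: posS.
- by rewrite /q; apply/andP; split; lia.
- have pn : p \notin S' :\: Pre i by rewrite in_setD (negbTE (pS' S p)) andbF.
  rewrite big_setU1 //= eq_sym qp cardsU1 pn cD /= /q.
  set X := (D i - (i.*2 - Ps i))%N.
  have split : (\sum_(y in S') (if y == nth p s i then X else d y) =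
     \sum_(y in S' :&: Pre i) (if y == nth p s i then X else d y) +
     \sum_(y in S' :\: Pre i) (if y == nth p s i then X else d y))%N.
    by rewrite (big_setID (Pre i)).
  move: split; rewrite (setIidPr (Pre_sub i)) -{1}Pre_n.
  rewrite (sum_Pre_if _ iN (leqnn n)) (sum_Pre_if _ iN (ltnW iN)).
  have := sum_if (fun j => D j) X iN.
  have -> : (\sum_(0 <= j < i) (if j == i then X else D j) = Ps i)%N.
    by apply: congr_big_nat => // j /andP[_ ji]; rewrite (ltn_eqF ji).
  move: (\sum_(0 <= j < n) (if j == i then X else D j))%N => A1.
  move: (\sum_(y in S' :\: Pre i) (if y == nth p s i then X else d y))%N => A2.
  rewrite /X; move: hx h1 h2 dp1 i0 iN; rewrite -!muln2.
  move: (Ps i) (Ps n) (D i) => a b c; lia.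
Qed.


Lemma Ps_rec k : (Ps k.+1 = Ps k + D k)%N.
Proof. by rewrite big_nat_recr. Qed.

Lemma step : (2 <= n)%N -> Good pos S d.
Proof.
move=> n2.
have tot := sum_total.
have Dpos : forall j, (j < n)%N -> (0 < D j)%N.
  by move=> j jn; apply: posS; move: (nth_S' pos jn); rewrite inS' => /andP[].
have dp0 : (0 < d p)%N by apply: posS.
case: (leqP 2 (d p)) => [dp2|dp1].
  have Qa : (fun k => (k.*2 <= (Ps k).+1)%N) 0%N by rewrite /= big_geq.
  have Qb : ~~ (fun k => (k.*2 <= (Ps k).+1)%N) n.
    by rewrite /= -ltnNge; move: tot; move: (Ps n) => b; lia.
  have [k [/andP[_ kn] Qk nQk]] := cross (Q := fun k => (k.*2 <= (Ps k).+1)%N) (leq0n n) Qa Qb.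
  apply: (case1 (k := k)) => //.
  - move: Qk nQk; rewrite Ps_rec /=; have := Dpos k kn; move: (D k) (Ps k) => a b.
    by rewrite -!ltnNge; lia.
  - move: Qk nQk; rewrite Ps_rec /=; have := Dpos k kn; move: (D k) (Ps k) => a b.
    lia.
have dpe : d p = 1%N by lia.
have P1 : Ps 1 = D 0 by rewrite Ps_rec big_geq.
have Pn : Ps n = (Ps n.-1 + D n.-1)%N by rewrite -Ps_rec prednK //; lia.
case: (leqP 2 (D 0)) => [d02|d01].
  by apply: (caseF (i := 0)) => //; rewrite ?big_geq.
case: (leqP 2 (D n.-1)) => [dn2|dn1].
  apply: (caseB (i := n.-1)) => //.
  - by apply/andP; split; lia.
  - move: tot Pn dn2 n2; rewrite dpe; move: (Ps n) (Ps n.-1) (D n.-1) => a b c; lia.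
  - move: tot Pn dn2 n2; rewrite dpe; move: (Ps n) (Ps n.-1) (D n.-1) => a b c; lia.
have D0 : D 0 = 1%N by move: d01 (Dpos 0 (ltnW n2)); move: (D 0) => a; lia.
have Dn : D n.-1 = 1%N.
  have : (n.-1 < n)%N by lia.
  by move/Dpos; move: dn1; move: (D n.-1) => a; lia.
have Qa : (fun j => (Ps j.+1 < j.+1.*2)%N) 0%N by rewrite /= P1 D0.
have Qb : ~~ (fun j => (Ps j.+1 < j.+1.*2)%N) n.-2.
  have -> : n.-2.+1 = n.-1 by lia.
  rewrite /= -leqNgt; move: tot Pn; rewrite dpe Dn; move: (Ps n) (Ps n.-1) => a b; lia.
have [k [/andP[_ kn] Qk nQk]] := cross (Q := fun j => (Ps j.+1 < j.+1.*2)%N) (leq0n n.-2) Qa Qb.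
apply: (caseF (i := k.+1)) => //.
- by lia.
- by move: Qk; move: (Ps k.+1) => a /=; lia.
- by move: nQk; rewrite /= -leqNgt Ps_rec; move: (Ps k.+2) (Ps k.+1) (D k.+1) => a b c; lia.
Qed.

End Cases.
Section Main.
Local Open Scope ring_scope.
Variable R : realType.
Variable V : finType.
Variable pos : V -> point R.
Hypothesis pos_inj : injective pos.
Hypothesis gp : forall u v w : V, u != v -> v != w -> u != w -> ~ collinear (pos u) (pos v) (pos w).

Lemma exists_min (S : {set V}) : S != set0 ->
  exists2 p, p \in S & forall q, q \in S -> (pos p).1 <= (pos q).1.
Proof.
case/set0Pn => p0 p0S.
case: (arg_minP (fun v => (pos v).1) p0S) => p pS pmin.
by exists p.
Qed.

Lemma base1 (S : {set V}) d : #|S| = 1%N -> (\sum_(v in S) d v = 0)%N -> Good pos S d.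
Proof.
move/eqP/cards1P => [v ->]; rewrite big_set1 => dv.
exists [rel u w | false]; split.
- split => //.
  + by move=> x y; rewrite !inE => /eqP -> /eqP ->; apply: connect0.
  + by move=> [|x [|y c]].
- by move=> a b x y.
- move=> w; rewrite inE => /eqP ->; rewrite dv /deg.
  by apply/eqP; rewrite cards_eq0; apply/eqP/setP => z; rewrite !inE.
Qed.

Lemma base2 (S : {set V}) d : #|S| = 2%N -> (\sum_(v in S) d v = 2)%N ->
  {in S, forall v, 0 < d v}%N -> Good pos S d.
Proof.
move/eqP/cards2P => [a [b [ab ->]]].
rewrite big_setU1 ?big_set1 ?inE //= => sd dpos.
have aS : a \in [set a; b] by rewrite !inE eqxx.
have bS : b \in [set a; b] by rewrite !inE eqxx orbT.
have da : d a = 1%N by move: (dpos a aS) (dpos b bS) sd; move: (d a) (d b) => x y; lia.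
have db : d b = 1%N by move: (dpos a aS) (dpos b bS) sd; move: (d a) (d b) => x y; lia.
have ba : (b == a) = false by apply/negbTE; rewrite eq_sym.
set e := [rel u w | ((u == a) && (w == b)) || ((u == b) && (w == a))].
have ein : forall u w, e u w -> (u \in [set a; b]) && (w \in [set a; b]).
  by move=> u w /orP[]/andP[/eqP -> /eqP ->]; rewrite aS bS.
have eset : forall u w, e u w -> [set u; w] = [set a; b].
  by move=> u w /orP[]/andP[/eqP -> /eqP ->] //; rewrite setUC.
exists e; split.
- split => //.
  + by move=> u w /=; case: (u == a); case: (u == b); case: (w == a); case: (w == b).
  + move=> u /=; apply/negbTE/negP => /orP[]/andP[/eqP -> /eqP e1]; move: ab.
      by rewrite e1 eqxx.
    by rewrite e1 eqxx.
  + have eab : connect e a b by apply: connect1; rewrite /= !eqxx.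
    have eba : connect e b a by apply: connect1; rewrite /= !eqxx orbT.
    move=> x y; rewrite !inE => /orP[]/eqP -> /orP[]/eqP ->; by rewrite ?connect0.
  + move=> c sz; apply/negP => /andP[cyc un].
    have sub : {subset c <= [:: a; b]}.
      by move=> x xc; have := ein _ _ (next_cycle cyc xc); rewrite !inE => /andP[].
    by have := uniq_leq_size un sub; rewrite /=; lia.
- move=> u w x y euw exy; by rewrite (eset _ _ euw) (eset _ _ exy) eqxx.
- move=> v; rewrite !inE => /orP[]/eqP ->; rewrite /deg.
  + rewrite da; have -> : [set w | e a w] = [set b].
      by apply/setP => w; rewrite !inE eqxx (negbTE ab) /= orbF.
    by rewrite cards1.
  + rewrite db; have -> : [set w | e b w] = [set a].
      by apply/setP => w; rewrite !inE eqxx ba /=.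
    by rewrite cards1.
Qed.



Lemma main N : forall (S : {set V}) d, (#|S| <= N)%N -> (0 < #|S|)%N ->
  (\sum_(v in S) d v = (#|S|.-1).*2)%N -> ((1 < #|S|)%N -> {in S, forall v, 0 < d v}%N) ->
  Good pos S d.
Proof.
elim: N => [|N IHN] S d hN h0 hs hp; first by move: hN h0; lia.
case: (ltnP #|S| N.+1) => [lt|ge].
  by apply: IHN => //; lia.
case: (ltnP 2 #|S|) => [gt2|le2].
  have Sne : S != set0 by rewrite -cards_eq0; lia.
  have [p pS pmin] := exists_min Sne.
  apply: (step gp pS pmin) => //.
  - move=> S' d' lt' h0' hs' hp'; apply: IHN => //; lia.
  - by apply: hp; lia.
  - by move: gt2; rewrite /n /S' (cardsD1 p S) pS; lia.
case: (ltnP 1 #|S|) => [gt1|le1].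
  have c2 : #|S| = 2%N by lia.
  by apply: base2 => //; [rewrite hs c2 | apply: hp; lia].
have c1 : #|S| = 1%N by lia.
by apply: base1 => //; rewrite hs c1.
Qed.

End Main.

Local Open Scope ring_scope.

Theorem proposition4 (R : realType) (V : finType) (pos : V -> point R)
    (Rs : {set V}) (f : V -> nat) :
  injective pos ->
  (forall u v w : V, u != v -> v != w -> u != w -> ~ collinear (pos u) (pos v) (pos w)) ->
  (forall x : V, x \in Rs -> (2 <= f x)%N) ->
  #|~: Rs| = (\sum_(x in Rs) (f x - 2) + 2)%N ->
  exists e : rel V,
    [/\ is_tree e, non_crossing pos e,
        [set v | deg e v == 1%N] = ~: Rs &
        (forall x : V, x \in Rs -> deg e x = f x)].
Proof.
move=> inj gp f2 hB.
pose d := fun v => if v \in Rs then f v else 1%N.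
have sumf : (\sum_(x in Rs) f x = \sum_(x in Rs) (f x - 2) + #|Rs| * 2)%N.
  rewrite -sum_nat_const -big_split /=; apply: eq_bigr => x xR.
  by rewrite subnK // f2.
have sumd : (\sum_(v in [set: V]) d v = \sum_(x in Rs) f x + #|~: Rs|)%N.
  rewrite (big_setID Rs) /= setTI setTD; congr (_ + _)%N.
    by apply: eq_bigr => x xR; rewrite /d xR.
  rewrite -sum1_card; apply: eq_bigr => x; rewrite inE /d => /negbTE ->.
  by [].
have cV : #|[set: V]| = (#|Rs| + #|~: Rs|)%N by rewrite cardsT -(cardsC Rs).
have [e [[ein sym irr con acyc] nc dg]] :
    Good pos [set: V] d.
  apply: (main gp (N := #|[set: V]|)) => //.
  - by rewrite cV hB; lia.
  - rewrite sumd sumf cV hB.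
    move: (\sum_(x in Rs) (f x - 2))%N => X; lia.
  - move=> _ v _; rewrite /d; case: (v \in Rs) (f2 v) => // h.
    by move: (h erefl); lia.
exists e; split.
- split; [by split | move=> x y | exact: acyc].
  exact: (con x y (in_setT x) (in_setT y)).
- exact: nc.
- apply/setP => v; rewrite !inE dg ?inE // /d.
  case vR: (v \in Rs) => //=.
  by have := f2 v vR; case: (f v) => [|[|k]].
- by move=> x xR; rewrite dg ?inE // /d xR.
Qed.
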